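(* Let $G$ be a weighted undirected graph with internal vertex set $I$, boundary vertex set $X$, edge set $E$ and positive weights $w$, and let $S$ be its min cut function on $2^X$. Then a point $f\in\mathbb R^X$ lies in $F_S$ if and only if $f=\Phi_v$ for some flow $v$ on $G$.
   Context: Each edge is a pair of distinct vertices of $I\cup X$. A cut is a subset $r\subseteq I\cup X$; its edge set $\eth r$ is the set of edges with exactly one vertex in $r$, and $|\eth r|:=\sum_{e\in\eth r}w(e)$. The min cut function is $S(A):=\min\{|\eth r|: r\subseteq I\cup X,\ r\cap X=A\}$ for $A\subseteq X$. Fix an arbitrary orientation of each edge and set $s(i,e)=+1$ if $e$ points toward vertex $i\in e$ and $-1$ otherwise. A flow is a function $v:E\to\mathbb R$ with $|v(e)|\le w(e)$ for all $e$ and $\sum_{e\ni i}s(i,e)v(e)=0$ for every $i\in I$; its boundary flux is $\Phi_v(x):=\sum_{e\ni x}s(x,e)v(e)$ for $x\in X$. $F_S$ is the set of $f\in\mathbb R^X$ with $\big|\sum_{x\in A}f(x)\big|\le S(A)$ for all $A\subseteq X$. *)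

(* Defs.v *)
From HB Require Import structures.
From mathcomp Require Import all_boot all_order all_algebra.
From mathcomp Require Import reals.
Set Implicit Arguments. Unset Strict Implicit. Unset Printing Implicit Defensive.
Import Order.TTheory GRing.Theory Num.Theory.
Local Open Scope ring_scope.

(* Vertices are I + X (internal vertices inl i, boundary vertices inr x).
   Edges form a finite type E; each edge e is oriented (arbitrarily) from
   [tail e] to [head e]. *)
Section Graph.
Variables (R : realType) (I X E : finType).
Variables (tail head : E -> (I + X)%type) (w : E -> R).

Definition vertex := (I + X)%type.

Definition simple_edges : Prop :=
  (forall e, tail e != head e) /\
  (forall e1 e2, [set tail e1; head e1] = [set tail e2; head e2] -> e1 = e2).

Definition incident (u : vertex) (e : E) : bool := (tail e == u) || (head e == u).

Definition sgn (u : vertex) (e : E) : R := if head e == u then 1 else -1.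

Definition eth (r : {set vertex}) : {set E} :=
  [set e | (tail e \in r) != (head e \in r)].

Definition cutw (r : {set vertex}) : R := \sum_(e in eth r) w e.

Definition traceX (r : {set vertex}) : {set X} := [set x | inr x \in r].

(* the canonical cut realizing A (used only as seed for the minimum) *)
Definition embX (A : {set X}) : {set vertex} := [set inr x | x in A].

Definition mincut (A : {set X}) : R :=
  \big[Num.min/cutw (embX A)]_(r : {set vertex} | traceX r == A) cutw r.

Definition in_FS (f : X -> R) : Prop :=
  forall A : {set X}, `|\sum_(x in A) f x| <= mincut A.

Definition is_flow (v : E -> R) : Prop :=
  (forall e, `|v e| <= w e) /\
  (forall i : I, \sum_(e | incident (inl i) e) sgn (inl i) e * v e = 0).

Definition flux (v : E -> R) (x : X) : R :=
  \sum_(e | incident (inr x) e) sgn (inr x) e * v e.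

End Graph.

(* Main.v *)
Require Import Defs.
From HB Require Import structures.
From mathcomp Require Import all_boot all_order all_algebra.
From mathcomp Require Import reals.
From mathcomp Require Import ring lra.
Set Implicit Arguments. Unset Strict Implicit. Unset Printing Implicit Defensive.
Import Order.TTheory GRing.Theory Num.Theory.
Local Open Scope ring_scope.

Section Gale.
Variables (R : realType) (V E : finType) (tl hd : E -> V) (c : E -> R).
Hypothesis c_ge0 : forall e, 0 <= c e.

Definition cross (S : {set V}) e := (tl e \in S) != (hd e \in S).
Definition dF (F : {set E}) S := \sum_(e in F) (cross S e)%:R * c e.
Definition coef e u : R := (hd e == u)%:R - (tl e == u)%:R.
Definition inflow (v : E -> R) u := \sum_e coef e u * v e.

Lemma sum_eq1 (a : V) (S : {set V}) :
  \sum_(u in S) ((a == u)%:R : R) = (a \in S)%:R.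
Proof.
case aS: (a \in S).
  rewrite (bigD1 a) //= eqxx big1 ?addr0 // => u /andP[_ ua].
  by rewrite eq_sym (negbTE ua).
rewrite big1 // => u uS; case: eqP => // au; by rewrite au uS in aS.
Qed.

Lemma sum_coef e (S : {set V}) :
  \sum_(u in S) coef e u = (hd e \in S)%:R - (tl e \in S)%:R.
Proof. by rewrite sumrB !sum_eq1. Qed.

Lemma sum_coefT e : \sum_u coef e u = 0.
Proof.
by rewrite (eq_bigl (fun u => u \in setT)) ?sum_coef ?in_setT ?subrr // => u; rewrite in_setT.
Qed.

Lemma sum_split (b : V -> R) (S1 S2 : {set V}) :
  \sum_(u in S1) b u + \sum_(u in S2) b u =
  \sum_(u in S1 :&: S2) b u + \sum_(u in S1 :|: S2) b u.
Proof.
rewrite !(big_mkcond (fun u => u \in _)) -!big_split /=; apply: eq_bigr => u _.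
rewrite in_setI in_setU; case: (u \in S1); case: (u \in S2) => /=;
  rewrite ?addr0 ?add0r //.
Qed.

Lemma cross_edge (S1 S2 : {set V}) e :
  ((cross (S1 :&: S2) e)%:R + (cross (S1 :|: S2) e)%:R : R) <=
  (cross S1 e)%:R + (cross S2 e)%:R.
Proof.
rewrite /cross !inE.
case: (tl e \in S1); case: (tl e \in S2); case: (hd e \in S1); case: (hd e \in S2);
  rewrite /= ?addr0 ?add0r ?lexx //; lra.
Qed.

Lemma submod (F : {set E}) e (S1 S2 : {set V}) : e \in F ->
  hd e \in S1 -> tl e \notin S1 -> tl e \in S2 -> hd e \notin S2 ->
  dF F (S1 :&: S2) + dF F (S1 :|: S2) + 2 * c e <= dF F S1 + dF F S2.
Proof.
move=> eF h1 t1 t2 h2.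
rewrite /dF -!big_split /= (bigD1 e eF) [X in _ <= X](bigD1 e eF) /=.
have -> : cross S1 e by rewrite /cross h1 (negbTE t1).
have -> : cross S2 e by rewrite /cross t2 (negbTE h2).
have -> : cross (S1 :&: S2) e = false by rewrite /cross !inE h1 (negbTE h2) t2 (negbTE t1).
have -> : cross (S1 :|: S2) e = false by rewrite /cross !inE h1 t2 orbT.
have : \sum_(i in F | i != e) ((cross (S1 :&: S2) i)%:R * c i + (cross (S1 :|: S2) i)%:R * c i)
   <= \sum_(i in F | i != e) ((cross S1 i)%:R * c i + (cross S2 i)%:R * c i).
  apply: ler_sum => i _; rewrite -!mulrDl; apply: ler_wpM2r => //; exact: cross_edge.
rewrite /=; lra.
Qed.

Lemma gale n : forall F : {set E}, #|F| = n -> forall b : V -> R,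
  \sum_u b u = 0 -> (forall S : {set V}, \sum_(u in S) b u <= dF F S) ->
  exists v : E -> R, [/\ forall e, `|v e| <= c e,
     forall u, inflow v u = b u & forall e, e \notin F -> v e = 0].
Proof.
elim: n => [|n IH] F cF b sb hb.
  have F0 : F = set0 by apply/eqP; rewrite -cards_eq0 cF.
  exists (fun _ => 0); split => // [e|u]; first by rewrite normr0.
  rewrite /inflow big1 => [|i _]; last by rewrite mulr0.
  have bl : forall u, b u <= 0.
    move=> u0; have := hb [set u0]; rewrite big_set1 /dF F0 big_set0 //.
  have : \sum_u (- b u) = 0 by rewrite sumrN sb oppr0.
  move/psumr_eq0P => H.
  have := H (fun u' _ => ltac:(by rewrite oppr_ge0)) u isT.
  by move/eqP; rewrite oppr_eq0 => /eqP ->.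
have [e eF] : exists e, e \in F.
  by apply/set0Pn; rewrite -card_gt0 cF.
set p := tl e; set q := hd e.
set L := \big[Num.max/- c e]_(S : {set V} | (q \in S) && (p \notin S))
            (\sum_(u in S) b u - dF F S + c e).
set U := \big[Num.min/c e]_(S : {set V} | (p \in S) && (q \notin S))
            (dF F S - c e - \sum_(u in S) b u).
have Lge : - c e <= L by apply: bigmax_ge_id.
have Ule : U <= c e by apply: bigmin_le_id.
have LU : L <= U.
  apply: bigmax_le => [|S1 /andP[q1 p1]]; apply: le_bigmin.
  - have := c_ge0 e; lra.
  - move=> S2 _; have := hb S2; lra.
  - have := hb S1; lra.
  move=> S2 /andP[p2 q2].
  have := submod eF q1 p1 p2 q2; have := sum_split b S1 S2.
  have := hb (S1 :&: S2); have := hb (S1 :|: S2); lra.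
set b' := fun u => b u - coef e u * L.
have cF' : #|F :\ e| = n by have := cardsD1 e F; rewrite eF cF add1n => -[].
have [||v' [v'c v'in v'0]] := IH (F :\ e) cF' b'.
- by rewrite /b' sumrB -mulr_suml sum_coefT sb mul0r subrr.
- move=> S; rewrite /b' sumrB -mulr_suml sum_coef.
  have dFe : dF F S = (cross S e)%:R * c e + dF (F :\ e) S.
    rewrite /dF (bigD1 e eF) /=; congr (_ + _); apply: eq_bigl => i.
    by rewrite in_setD1 andbC.
  have := hb S; move: dFe; rewrite /cross -/p -/q.
  case pS: (p \in S); case qS: (q \in S) => /= dFe; rewrite dFe /=.
  + lra.
  + have : U <= dF F S - c e - \sum_(u in S) b u by apply: bigmin_le_cond; rewrite pS qS.
    rewrite dFe; lra.
  + have : \sum_(u in S) b u - dF F S + c e <= L by apply: le_bigmax_cond; rewrite pS qS.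
    rewrite dFe; lra.
  + lra.
exists (fun i => if i == e then L else v' i); split.
- move=> i; case: eqP => [->|_]; last exact: v'c.
  rewrite ler_norml; lra.
- move=> u; rewrite /inflow (bigD1 e) //= eqxx.
  have := v'in u; rewrite /inflow (bigD1 e) //= v'0 ?mulr0 ?add0r; last by rewrite !inE eqxx.
  have -> : \sum_(i | i != e) coef i u * (if i == e then L else v' i) =
            \sum_(i | i != e) coef i u * v' i.
    by apply: eq_bigr => i /negbTE ->.
  move=> ->; rewrite /b'; lra.
- move=> i iF; case: eqP => [ie|_]; first by rewrite ie eF in iF.
  by apply: v'0; rewrite !inE negb_and iF orbT.
Qed.


Lemma sum_inflow v (S : {set V}) :
  \sum_(u in S) inflow v u = \sum_e ((hd e \in S)%:R - (tl e \in S)%:R) * v e.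
Proof.
rewrite /inflow exchange_big /=; apply: eq_bigr => e _.
by rewrite -mulr_suml sum_coef.
Qed.

Lemma cut_bound v (S : {set V}) : (forall e, `|v e| <= c e) ->
  `|\sum_(u in S) inflow v u| <= dF setT S.
Proof.
move=> vc; rewrite sum_inflow /dF.
apply: le_trans (ler_norm_sum _ _ _) _.
rewrite (eq_bigl (fun e => e \in setT)) => [|e]; last by rewrite in_setT.
apply: ler_sum => e _; rewrite normrM /cross.
have := vc e; have := normr_ge0 (v e).
case: (hd e \in S); case: (tl e \in S) => /=; rewrite ?subrr ?normr0 ?mul0r ?mul1r //;
  rewrite ?sub0r ?subr0 ?normrN ?normr1 ?mul1r //.
Qed.

End Gale.

Section Main.
Variables (R : realType) (I X E : finType).
Variables (tail head : E -> (I + X)%type) (w : E -> R).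

Lemma flux_inflow (v : E -> R) u : (forall e, tail e != head e) ->
  \sum_(e | incident tail head u e) sgn R head u e * v e = inflow tail head v u.
Proof.
move=> th; rewrite /inflow big_mkcond /=; apply: eq_bigr => e _.
rewrite /incident /sgn /coef.
case: (eqVneq (head e) u) => [hu|hu]; case: (eqVneq (tail e) u) => [tu|tu] //=.
- by move: (th e); rewrite hu tu eqxx.
- by rewrite subr0.
- by rewrite sub0r mulN1r.
- by rewrite subrr mul0r.
Qed.

Lemma mincut_le (r : {set (I + X)%type}) :
  mincut tail head w (traceX r) <= cutw tail head w r.
Proof. exact: bigmin_le_cond. Qed.

Lemma cutw_dF (r : {set (I + X)%type}) :
  cutw tail head w r = dF tail head w setT r.
Proof.
rewrite /cutw /dF big_mkcond /= (eq_bigl (fun e => e \in setT)) => [|e]; last by rewrite in_setT.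
apply: eq_bigr => e _; rewrite /eth inE /cross.
by case: ((tail e \in r) != (head e \in r)); rewrite ?mul1r ?mul0r.
Qed.

Lemma trace_emb (A : {set X}) : traceX (embX I A) = A.
Proof.
apply/setP => x; rewrite /traceX /embX inE.
apply/imsetP/idP => [[y yA [->]] //|xA]; by exists x.
Qed.

Lemma cutw_setT : cutw tail head w setT = 0.
Proof. by rewrite /cutw big_pred0 // => e; rewrite /eth !inE. Qed.

Lemma flow_bound (v : E -> R) (r : {set (I + X)%type}) :
  (forall e, `|v e| <= w e) -> (forall i, inflow tail head v (inl i) = 0) ->
  `|\sum_(x in traceX r) inflow tail head v (inr x)| <= cutw tail head w r.
Proof.
move=> vc v0.
have <- : \sum_(u in r) inflow tail head v u = \sum_(x in traceX r) inflow tail head v (inr x).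
  rewrite big_sumType /= big1 ?add0r //.
  by apply: eq_bigl => x; rewrite /traceX inE.
rewrite cutw_dF; exact: cut_bound.
Qed.

End Main.

Theorem theorem29 (R : realType) (I X E : finType)
  (tail head : E -> (I + X)%type) (w : E -> R) :
  simple_edges tail head ->
  (forall e, 0 < w e) ->
  forall f : X -> R,
    in_FS tail head w f <->
    exists v : E -> R, is_flow tail head w v /\ forall x, f x = flux tail head v x.
Proof.
move=> [th _] wpos f; split.
- move=> hf.
  pose b (u : (I + X)%type) : R := match u with inl _ => 0 | inr x => f x end.
  have bS : forall S : {set (I + X)%type}, \sum_(u in S) b u = \sum_(x in traceX S) f x.
    move=> S; rewrite big_sumType /= big1 ?add0r //.
    by apply: eq_bigl => x; rewrite /traceX inE.
  have sb : \sum_u b u = 0.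
    rewrite (eq_bigl (fun u => u \in setT)) => [|u]; last by rewrite in_setT.
    rewrite bS; apply/eqP; rewrite -normr_le0.
    apply: le_trans (hf _) _; apply: le_trans (mincut_le _ _ _ _) _.
    by rewrite cutw_setT.
  have hb : forall S : {set (I + X)%type}, \sum_(u in S) b u <= dF tail head w setT S.
    move=> S; rewrite bS -cutw_dF; apply: le_trans (ler_norm _) _.
    apply: le_trans (hf _) _; exact: mincut_le.
  have [v [vc vin _]] := gale (fun e => ltW (wpos e)) (erefl #|[set: E]|) sb hb.
  exists v; split; first split => // i.
    by rewrite flux_inflow // vin.
  by move=> x; rewrite /flux flux_inflow // vin.
- move=> [v [[vc vcons] fv]] A.
  have v0 : forall i, inflow tail head v (inl i) = 0.
    by move=> i; rewrite -flux_inflow.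
  have fE : forall B : {set X}, \sum_(x in B) f x = \sum_(x in B) inflow tail head v (inr x).
    by move=> B; apply: eq_bigr => x _; rewrite fv /flux flux_inflow.
  rewrite fE /mincut; apply: le_bigmin => [|r /eqP <-].
  + rewrite -{1}(@trace_emb I X A); exact: flow_bound.
  + exact: flow_bound.
Qed.
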